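(* Let $G$ be a finite group of even order which is not a $p$-group for any prime $p$. Then the co-prime graph $\Gamma_{CP}(G)$ is not minimally edge connected.
   Context: The co-prime graph $\Gamma_{CP}(G)$ of a finite group $G$ is the simple undirected graph with vertex set $G$ in which two distinct elements $x,y$ are adjacent if and only if $\gcd(o(x),o(y))=1$. A $p$-group is a group of order $p^n$ for a prime $p$. For a connected graph $\Gamma$, an edge cut-set is a set $S$ of edges such that $\Gamma-S$ is disconnected or has just one vertex, and the edge connectivity $\kappa'(\Gamma)$ is the smallest size of an edge cut-set. $\Gamma$ is minimally edge connected if $\kappa'(\Gamma-\epsilon)=\kappa'(\Gamma)-1$ for every edge $\epsilon$ of $\Gamma$. *)

(* Defs.v *)
From mathcomp Require Import all_boot all_order all_fingroup all_solvable.
Set Implicit Arguments. Unset Strict Implicit. Unset Printing Implicit Defensive.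

(* A simple graph on a finite vertex type T is given by its edge set
   E : {set {set T}}, each edge being a 2-element subset {x, y}. *)

Section Graphs.
Variable T : finType.

Definition adj (E : {set {set T}}) : rel T := fun x y => [set x; y] \in E.

Definition connectedb (E : {set {set T}}) : bool :=
  [forall x, forall y, connect (adj E) x y].

Definition edge_cutb (E S : {set {set T}}) : bool :=
  (S \subset E) && (~~ connectedb (E :\: S) || (#|T| <= 1)).

(* edge connectivity: the smallest size of an edge cut-set.
   (E itself is always an edge cut-set, so the default #|E| is harmless.) *)
Definition edge_conn (E : {set {set T}}) : nat :=
  \big[minn/#|E|]_(S : {set {set T}} | edge_cutb E S) #|S|.

Definition minimally_edge_connected (E : {set {set T}}) : Prop :=
  forall e, e \in E -> edge_conn (E :\ e) = edge_conn E - 1.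
End Graphs.

Definition coprime_edges (gT : finGroupType) : {set {set gT}} :=
  [set e : {set gT} | [exists x : gT, exists y : gT,
     (x != y) && (e == [set x; y]) && coprime #[x]%g #[y]%g]].

(* Main.v *)
Require Import Defs.
From mathcomp Require Import all_boot all_order all_fingroup all_solvable.
Set Implicit Arguments. Unset Strict Implicit. Unset Printing Implicit Defensive.

Section Aux.
Variable T : finType.

Lemma set2_injr (a b c : T) : [set a; b] = [set a; c] -> b = c.
Proof.
move=> E. have : b \in [set a; c] by rewrite -E !inE eqxx orbT.
rewrite !inE => /orP[/eqP ba|/eqP //].
have : c \in [set a; b] by rewrite E !inE eqxx orbT.
by rewrite !inE ba orbb => /eqP ->.
Qed.

Lemma adj_sym (E : {set {set T}}) : symmetric (adj E).
Proof. by move=> x y; rewrite /adj setUC. Qed.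

Lemma bigmin_seq_le (x0 : nat) (F : {set {set T}} -> nat) s S :
  S \in s -> \big[minn/x0]_(i <- s) F i <= F S.
Proof.
elim: s => [|a s IH] //; rewrite inE big_cons => /orP [/eqP ->|Ss].
  exact: geq_minl.
exact: leq_trans (geq_minr _ _) (IH Ss).
Qed.

Lemma conn_le (E S : {set {set T}}) : edge_cutb E S -> edge_conn E <= #|S|.
Proof.
move=> H; rewrite /edge_conn -big_filter; apply: bigmin_seq_le.
by rewrite mem_filter H mem_index_enum.
Qed.

Lemma conn_ge (E : {set {set T}}) K : K <= #|E| ->
  (forall S, edge_cutb E S -> K <= #|S|) -> K <= edge_conn E.
Proof.
move=> h1 h2; rewrite /edge_conn; elim/big_ind: _ => //.
- by move=> x y; rewrite leq_min => -> ->.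

Qed.

Lemma no_edge_disconn (F : {set {set T}}) x y :
  (forall z, ~~ adj F x z) -> y != x -> ~~ connect (adj F) x y.
Proof.
move=> H yx; apply/negP => /connectP [[|z p]] /=.
- by move=> _ yx'; rewrite yx' eqxx in yx.
- by case/andP=> xz; rewrite (negbTE (H z)) in xz.
Qed.

Lemma odd_invol (f : T -> T) (A : {set T}) : involutive f ->
  (forall x, x \in A -> f x \in A) ->
  odd #|A| = odd #|[set x in A | f x == x]|.
Proof.
move=> fK; move: {2}#|A| (leqnn #|A|) => n; elim: n A => [|n IH] A.
  rewrite leqn0 => /eqP/cards0_eq -> _.
  by rewrite (_ : [set x in set0 | _] = set0) ?cards0 //; apply/setP=> x; rewrite !inE.
move=> hA cA.
case: (boolP [exists x in A, f x != x]) => [/exists_inP [x xA fx]|].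
  set B := A :\: [set x; f x].
  have xB : [set x; f x] \subset A by rewrite subUset !sub1set xA cA.
  have cardA : #|A| = #|B| + 2.
    by rewrite -(cardsID [set x; f x] A) (setIidPr xB) cards2 eq_sym fx addnC.
  have fixE : [set y in A | f y == y] = [set y in B | f y == y].
    apply/setP=> y; rewrite !inE; case fy: (f y == y); rewrite ?andbF ?andbT //.
    have yx : y != x by apply: contraNneq fx => <-.
    have yfx : y != f x.
      by apply: contraNneq fx => e; move: fy; rewrite e fK eq_sym => ->.
    by rewrite (negbTE yx) (negbTE yfx).
  rewrite cardA addn2 /= negbK fixE; apply: IH.
    by move: hA; rewrite cardA addn2 => /ltnW.
  move=> y; rewrite !inE => /andP [yn yA]; rewrite cA // andbT.
  apply: contra yn => /orP [/eqP e|/eqP e].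
    by rewrite -[y]fK e eqxx orbT.
  by rewrite (inv_inj fK e) eqxx.
rewrite negb_exists_in => /forall_inP H.
congr odd; apply: eq_card => y; rewrite inE.
by case yA: (y \in A) => //=; rewrite (negbNE (H y yA)).
Qed.

End Aux.


Section Grp.
Variable gT : finGroupType.
Local Notation E := (coprime_edges gT).

Definition Nb (x : gT) : {set gT} := [set y | (y != x) && coprime #[x]%g #[y]%g].

Lemma edgeP (x y : gT) : ([set x; y] \in E) = (x != y) && coprime #[x]%g #[y]%g.
Proof.
apply/idP/idP.
- rewrite inE => /existsP[a /existsP[b /andP[/andP[ab /eqP e] cab]]].
  have : x \in [set a; b] by rewrite -e !inE eqxx.
  rewrite !inE => /orP [/eqP xa|/eqP xb].
    rewrite xa in e *; have yb := set2_injr e; by rewrite yb ab.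
  rewrite xb [RHS]setUC in e *; have ya := set2_injr e.
  by rewrite ya eq_sym ab coprime_sym.
- move=> H; rewrite inE; apply/existsP; exists x; apply/existsP; exists y.
  by rewrite eqxx andbT; case/andP: H => -> ->.
Qed.

Lemma edge_at (e : {set gT}) v : e \in E -> v \in e ->
  exists2 z, e = [set v; z] & z \in Nb v.
Proof.
rewrite inE => /existsP[a /existsP[b /andP[/andP[ab /eqP ->] cab]]].
rewrite !inE => /orP [/eqP ->|/eqP ->].
  by exists b => //; rewrite inE eq_sym ab.
by exists a; [rewrite setUC | rewrite inE ab coprime_sym].
Qed.

Lemma conn_via1 : connectedb E.
Proof.
have h1 : forall x, connect (adj E) x 1%g.
  move=> x; case: (eqVneq x 1%g) => [->|x1]; first exact: connect0.
  by apply: connect1; rewrite /adj edgeP x1 order1 coprimen1.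
apply/forallP=> x; apply/forallP=> y; apply: connect_trans (h1 x) _.
by rewrite (sym_connect_sym (@adj_sym _ E)) h1.
Qed.

Lemma core (w v : gT) : w != 1%g -> #|Nb v| < #|Nb w| -> 1 < #|gT| ->
  ~ minimally_edge_connected E.
Proof.
move=> w1 lt n2 Hmin.
set eps := [set 1%g; w].
have epsE : eps \in E by rewrite edgeP eq_sym w1 order1 coprime1n.
have other : forall u : gT, exists y, y != u.
  move=> u; case: (eqVneq u 1%g) => [->|u1]; first by exists w.
  by exists 1%g; rewrite eq_sym.
have Kupper : edge_conn E <= #|Nb v|.
  set Sv := [set e in E | v \in e].
  have cut : edge_cutb E Sv.
    apply/andP; split; first by apply/subsetP=> e; rewrite inE => /andP[].
    apply/orP; left; apply/negP => /forallP /(_ v) /forallP.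
    have [y yv] := other v; move/(_ y); apply/negP.
    apply: no_edge_disconn yv => z; rewrite /adj !inE.
    by rewrite eqxx /= andbT andNb.
  apply: leq_trans (conn_le cut) _.
  apply: leq_trans (leq_imset_card (fun z => [set v; z]) (Nb v)).
  apply/subset_leq_card/subsetP => e; rewrite inE => /andP [eE ve].
  by have [z -> zN] := edge_at eE ve; apply: imset_f.
have Kpos : 0 < edge_conn E.
  apply: conn_ge; first by apply/card_gt0P; exists eps.
  move=> S /andP [_ /orP [|]]; last by rewrite leqNgt n2.
  rewrite card_gt0; apply: contraNneq => ->.
  by rewrite setD0 conn_via1.
have Klow : edge_conn E <= edge_conn (E :\ eps).
  have Hcut : forall S, edge_cutb (E :\ eps) S -> edge_conn E <= #|S|.
    move=> S /andP [sS /orP [|]]; last by rewrite leqNgt n2.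
    set F := (E :\ eps) :\: S => /forallPn [a /forallPn [b nab]].
    have symF : connect_sym (adj F) := sym_connect_sym (@adj_sym _ F).
    have [y ny] : exists y, ~~ connect (adj F) 1%g y.
      case ca: (connect (adj F) 1%g a); last by exists a; rewrite ca.
      exists b; apply: contra nab => cb.
      by apply: connect_trans cb; rewrite symF.
    case wX: (connect (adj F) 1%g w).
    - have sSE : S \subset E by apply: subset_trans sS (subsetDl _ _).
      apply: conn_le; rewrite /edge_cutb sSE /=; apply/orP; left.
      apply/negP => /forallP /(_ 1%g) /forallP /(_ y) c1y.
      have step : forall x x', adj (E :\: S) x x' ->
          connect (adj F) 1%g x -> connect (adj F) 1%g x'.
        move=> x x'; rewrite /adj inE => /andP [xS xE] cx.
        case: (eqVneq [set x; x'] eps) => [e|ne].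
          have : x' \in eps by rewrite -e !inE eqxx orbT.
          by rewrite !inE => /orP [/eqP ->|/eqP ->] //; exact: connect0.
        apply: connect_trans cx (connect1 _).
        by rewrite /adj /F in_setD in_setD1 xS ne xE.
      have cl : closed (adj (E :\: S)) (connect (adj F) 1%g).
        move=> x x' h; apply/idP/idP; first exact: step.
        by apply: step; rewrite adj_sym.
      have := closed_connect cl c1y.
      rewrite !inE connect0 => /esym yin.
      by rewrite yin in ny.
    - have w1N : 1%g \in Nb w by rewrite inE eq_sym w1 order1 coprimen1.
      have ne1 : forall z, z != 1%g -> [set w; z] != eps.
        move=> z z1; apply/eqP => e; have : 1%g \in [set w; z] by rewrite e !inE eqxx.
        by rewrite !inE eq_sym (negbTE w1) eq_sym (negbTE z1).
      pose g z := if connect (adj F) 1%g z then [set w; z] else [set 1%g; z].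
      apply: leq_trans Kupper _.
      have : #|Nb v| <= #|Nb w :\ 1%g| by move: lt; rewrite (cardsD1 1%g (Nb w)) w1N.
      move/leq_trans; apply.
      rewrite -(card_in_imset (f:=g)).
      + apply/subset_leq_card/subsetP => e /imsetP [z]; rewrite !inE.
        move=> /andP [z1 /andP [zw cz]] ->.
        rewrite /g; case cz1: (connect (adj F) 1%g z).
        * case nS: ([set w; z] \in S) => //.
          have : connect (adj F) 1%g w.
            apply: connect_trans cz1 (connect1 _).
            rewrite /adj /F setUC in_setD in_setD1 nS ne1 // edgeP.
            by rewrite eq_sym zw.
          by rewrite wX.
        * case nS: ([set 1%g; z] \in S) => //.
          have ne' : [set 1%g; z] != eps.
            by apply/eqP => /set2_injr e0; rewrite e0 eqxx in zw.
          have : connect (adj F) 1%g z.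
            apply: connect1; rewrite /adj /F in_setD in_setD1 nS ne' edgeP.
            by rewrite eq_sym z1 order1 coprime1n.
          by rewrite cz1.
      + move=> z z'; rewrite !inE => /andP[z1 /andP[zw _]] /andP[z'1 /andP[z'w _]].
        rewrite /g; case: (connect _ _ z); case: (connect _ _ z') => e.
        * exact: set2_injr e.
        * have : 1%g \in [set w; z] by rewrite e !inE eqxx.
          by rewrite !inE eq_sym (negbTE w1) eq_sym (negbTE z1).
        * have : 1%g \in [set w; z'] by rewrite -e !inE eqxx.
          by rewrite !inE eq_sym (negbTE w1) eq_sym (negbTE z'1).
        * exact: set2_injr e.
  apply: conn_ge => //; apply: Hcut.
  rewrite /edge_cutb subxx /= setDv; apply/orP; left.
  apply/negP => /forallP /(_ 1%g) /forallP.
  have [y y1] := other 1%g; move/(_ y); apply/negP.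
  by apply: no_edge_disconn y1 => z; rewrite /adj inE.
move: Klow; rewrite (Hmin eps epsE).
by case: (edge_conn E) Kpos => // k _; rewrite subn1 /= ltnn.
Qed.

End Grp.


Lemma selfinv_dvd2 (gT : finGroupType) (x : gT) : (x^-1 == x)%g -> #[x]%g %| 2.
Proof. by move/eqP=> h; rewrite order_dvdn expgS expg1 -{1}h mulVg. Qed.

Lemma dvd2_cases d : d %| 2 -> d = 1 \/ d = 2.
Proof.
move=> h; have := @dvdn_leq d 2 isT h; case: d h => [|[|[|d]]] //; by [left|right].
Qed.

Theorem mainTheorem12 (gT : finGroupType) :
  ~~ odd #|[set: gT]| ->
  (forall p : nat, prime p -> ~~ (p.-group [set: gT])%g) ->
  ~ minimally_edge_connected (coprime_edges gT).
Proof.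
move=> hev hp.
have n2 : 1 < #|gT|.
  by move: hev (cardG_gt0 [set: gT]%G); rewrite /= cardsT; case: #|gT| => [|[|n]].
have d2 : 2 %| #|[set: gT]%G| by rewrite dvdn2.
have [t _ ot] := @Cauchy _ 2 [set: gT]%G isT d2.
have [p [pr pd p2]] : exists p, [/\ prime p, p %| #|[set: gT]%G| & p != 2].
  move: (hp 2 isT); rewrite /pgroup /pnat /= cardsT (ltnW n2) /=.
  move=> /allPn [p]; rewrite mem_primes => /and3P [pr _ pd] p2.
  by exists p; split => //; rewrite cardsT.
have [w _ ow] := @Cauchy _ p [set: gT]%G pr pd.
have t1 : t != 1%g by rewrite -order_eq1 ot.
have oddP_ : odd p.
  by case: (even_prime pr) => [e|//]; rewrite e eqxx in p2.
have w1 : w != 1%g by rewrite -order_eq1 ow neq_ltn prime_gt1 ?orbT.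
have invI : forall A : {set gT}, (forall x, x \in A -> x^-1 \in A)%g ->
   odd #|A| = odd #|[set x in A | x^-1 == x]%g|.
  by move=> A; apply: odd_invol; exact: invgK.
have oddt : odd #|Nb t|.
  have -> : Nb t = [set y | odd #[y]%g].
    apply/setP=> y; rewrite !inE ot coprime2n.
    case oy: (odd _); rewrite ?andbF ?andbT //.
    by apply: contraTneq oy => ->; rewrite ot.
  rewrite invI; last by move=> x; rewrite !inE orderV.
  rewrite (_ : [set x in _ | _] = [set 1%g]) ?cards1 //.
  apply/setP=> x; rewrite !inE; apply/idP/idP.
    case/andP=> ox /selfinv_dvd2 /dvd2_cases [o1|o2].
      by rewrite -order_eq1 o1.
    by rewrite o2 in ox.
  by move/eqP ->; rewrite order1 invg1 eqxx.
have evw : ~~ odd #|Nb w|.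
  rewrite invI; last first.
    move=> x; rewrite !inE orderV => /andP [_ c]; rewrite c andbT.
    apply: contraTneq c => e; rewrite -(orderV x) e ow /coprime gcdnn.
    by rewrite eq_sym neq_ltn prime_gt1 ?orbT.
  have : ~~ odd #|[set x in [set: gT] | x^-1 == x]%g|.
    by rewrite -invI // => x _; rewrite inE.
  move=> h; rewrite (_ : [set x in Nb w | _] = [set x in [set: gT] | x^-1 == x]%g) //.
  apply/setP => x; rewrite !inE ow.
  case sx: (x^-1 == x)%g; rewrite ?andbF ?andbT //.
  have dx := selfinv_dvd2 sx.
  have cx : coprime p #[x]%g.
    by apply: coprime_dvdr dx _; rewrite coprimen2.
  rewrite cx andbT; apply: contraTneq cx => ->.
  by rewrite ow /coprime gcdnn eq_sym neq_ltn prime_gt1 ?orbT.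
case: (ltngtP #|Nb t| #|Nb w|) => h.
- exact: core w1 h n2.
- exact: core t1 h n2.
- by move: oddt evw; rewrite h => ->.
Qed.
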